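(* Let $H$ and $H_j$ be $n$-qubit Hermitian operators, each with at most $m$ nonzero Pauli coefficients, and let $T\in\mathbb R$. Let $W$ be any Hermitian operator with $\|W\|_\infty<\pi$ such that $e^{-iW}=e^{i\phi}e^{iHT}e^{-iH_jT}$ for some $\phi\in\mathbb R$. Then $W$ has at most $4^m$ nonzero Pauli coefficients.
   Context: Pauli operators are labelled by $v\in\mathbb F_2^{2n}$, $P_v\in\{I,X,Y,Z\}^{\otimes n}$ (identity labelled $0$); every $n$-qubit operator has a unique expansion in the $P_v$. The number of nonzero coefficients of $W$ in this expansion is its Pauli sparsity $\operatorname{supp}_P(W)$. $\|\cdot\|_\infty$ is the operator norm. *)

(* Defs.v *)
From HB Require Import structures.
From mathcomp Require Import all_boot all_order all_algebra.
From mathcomp Require Import all_classical all_reals all_analysis.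
From mathcomp Require Import complex.
Set Implicit Arguments. Unset Strict Implicit. Unset Printing Implicit Defensive.
Import Order.TTheory GRing.Theory Num.Theory numFieldNormedType.Exports.
Local Open Scope ring_scope.

Section QuantumDefs.
Variable R : realType.
Local Notation C := (R[i]).

(* Single-qubit Pauli matrices, labelled 0 = I, 1 = X, 2 = Y, 3 = Z,
   entries indexed by bits (false = |0>, true = |1>). *)
Definition pauli1 (a : 'I_4) (x y : bool) : C :=
  match val a with
  | 0 => if x == y then 1 else 0
  | 1 => if x == y then 0 else 1
  | 2 => if x == y then 0 else if x then Complex 0 1 else Complex 0 (-1)
  | _ => if x == y then (if x then -1 else 1) else 0
  end.

Definition qbit (k i : nat) : bool := odd (i %/ 2 ^ k).

(* n-qubit Pauli labels: a Pauli letter for every qubit (equivalently a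
   vector of F_2^{2n}); the all-identity label is the identity operator. *)
Definition plabel (n : nat) := {ffun 'I_n -> 'I_4}.

(* P_v = tensor product of the single-qubit Paulis *)
Definition pauli (n : nat) (v : plabel n) : 'M[C]_(2 ^ n) :=
  \matrix_(i, j) \prod_(k < n) pauli1 (v k) (qbit k i) (qbit k j).

Definition pauli_sparsity_le (n : nat) (W : 'M[C]_(2 ^ n)) (s : nat) : Prop :=
  exists c : {ffun plabel n -> C},
    W = \sum_(v : plabel n) c v *: pauli v /\ (#|[set v | (c v != 0)%R]| <= s)%N.

Definition hermitian_op (N : nat) (W : 'M[C]_N) : Prop :=
  forall i j, W j i = conjc (W i j).

Definition vnorm2 (N : nat) (v : 'cV[C]_N) : R :=
  \sum_(i < N) (complex.Re (v i 0) ^+ 2 + complex.Im (v i 0) ^+ 2).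

Definition opnorm (N : nat) (W : 'M[C]_N) : R :=
  sup [set Num.sqrt (vnorm2 (W *m v))
        | v in [set v : 'cV[C]_N | vnorm2 v = 1]%classic]%classic.

Definition mxpow (N : nat) (A : 'M[C]_N) (k : nat) : 'M[C]_N :=
  iter k (mulmx A) 1%:M.

Definition is_mexp (N : nat) (A M : 'M[C]_N) : Prop :=
  forall i j,
    ((fun K => complex.Re ((\sum_(k < K) (k`!%:R)^-1 *: mxpow A k) i j)) @ \oo
      --> complex.Re (M i j))%classic /\
    ((fun K => complex.Im ((\sum_(k < K) (k`!%:R)^-1 *: mxpow A k) i j)) @ \oo
      --> complex.Im (M i j))%classic.

End QuantumDefs.

Notation cplx R := (complex R) (only parsing).

(* Main.v *)
Require Import Defs.
From HB Require Import structures.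
From mathcomp Require Import all_boot all_order all_algebra.
From mathcomp Require Import all_classical all_reals all_analysis.
From mathcomp Require Import complex zify ring lra.
Import Order.TTheory GRing.Theory Num.Theory.

Module Part1.
Import Order.TTheory GRing.Theory Num.Theory numFieldNormedType.Exports.
Set Implicit Arguments. Unset Strict Implicit. Unset Printing Implicit Defensive.
Local Open Scope ring_scope.
Local Open Scope classical_set_scope.

Section Cvg.
Variable R : realType.
Local Notation C := (R[i]).

Definition ccvg (u : nat -> C) (z : C) :=
  ((fun k => complex.Re (u k)) @ \oo --> complex.Re z) /\
  ((fun k => complex.Im (u k)) @ \oo --> complex.Im z).

Lemma ReD (x y : C) : complex.Re (x + y) = complex.Re x + complex.Re y.
Proof. by case: x; case: y. Qed.
Lemma ImD (x y : C) : complex.Im (x + y) = complex.Im x + complex.Im y.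
Proof. by case: x; case: y. Qed.
Lemma ReM (x y : C) : complex.Re (x * y) =
  complex.Re x * complex.Re y - complex.Im x * complex.Im y.
Proof. by case: x => a b; case: y. Qed.
Lemma ImM (x y : C) : complex.Im (x * y) =
  complex.Re x * complex.Im y + complex.Im x * complex.Re y.
Proof. by case: x => a b; case: y. Qed.

Lemma ccvg_cst (c : C) : ccvg (fun _ => c) c.
Proof. by split; apply: cvg_cst. Qed.

Lemma ccvgD u v a b : ccvg u a -> ccvg v b -> ccvg (fun k => u k + v k) (a + b).
Proof.
move=> [h1 h2] [h3 h4]; split.
- under eq_fun do rewrite ReD. by rewrite ReD; apply: cvgD.
- under eq_fun do rewrite ImD. by rewrite ImD; apply: cvgD.
Qed.

Lemma ccvgMl (c : C) u a : ccvg u a -> ccvg (fun k => c * u k) (c * a).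
Proof.
move=> [h1 h2]; split.
- under eq_fun do rewrite ReM. rewrite ReM.
  apply: cvgB; apply: cvgM => //; exact: cvg_cst.
- under eq_fun do rewrite ImM. rewrite ImM.
  apply: cvgD; apply: cvgM => //; exact: cvg_cst.
Qed.

Lemma ccvgMr (c : C) u a : ccvg u a -> ccvg (fun k => u k * c) (a * c).
Proof.
move=> h; under [X in ccvg X _]eq_fun do rewrite mulrC.
by rewrite mulrC; apply: ccvgMl.
Qed.

Lemma ccvg_sumr (I : Type) (r : seq I) (u : I -> nat -> C) (z : I -> C) :
  (forall i, ccvg (u i) (z i)) ->
  ccvg (fun k => \sum_(i <- r) u i k) (\sum_(i <- r) z i).
Proof.
move=> h; elim: r => [|x r IH].
  under eq_fun do rewrite big_nil. rewrite big_nil; exact: ccvg_cst.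
under eq_fun do rewrite big_cons. rewrite big_cons; exact: ccvgD.
Qed.

Lemma ccvg_unique u a b : ccvg u a -> ccvg u b -> a = b.
Proof.
move=> [h1 h2] [h3 h4].
have e1 : complex.Re a = complex.Re b.
  by rewrite -(cvg_lim (@Rhausdorff R) h1) -(cvg_lim (@Rhausdorff R) h3).
have e2 : complex.Im a = complex.Im b.
  by rewrite -(cvg_lim (@Rhausdorff R) h2) -(cvg_lim (@Rhausdorff R) h4).
clear h1 h2 h3 h4; move: e1 e2; case: a => a1 a2; case: b => b1 b2 /= -> ->. by [].
Qed.

Definition mcvg p q (x : nat -> 'M[C]_(p, q)) (y : 'M[C]_(p, q)) :=
  forall i j, ccvg (fun k => x k i j) (y i j).

Lemma mcvg_mull p q r (A : 'M[C]_(p, q)) (x : nat -> 'M[C]_(q, r)) (y : 'M[C]_(q, r)) :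
  mcvg x y -> mcvg (fun k => A *m x k) (A *m y).
Proof.
move=> h i j; under eq_fun do rewrite mxE. rewrite mxE.
apply: ccvg_sumr => l; exact: ccvgMl.
Qed.

Lemma mcvg_mulr p q r (A : 'M[C]_(q, r)) (x : nat -> 'M[C]_(p, q)) (y : 'M[C]_(p, q)) :
  mcvg x y -> mcvg (fun k => x k *m A) (y *m A).
Proof.
move=> h i j; under eq_fun do rewrite mxE. rewrite mxE.
apply: ccvg_sumr => l; exact: ccvgMr.
Qed.

Lemma mcvg_unique p q (x : nat -> 'M[C]_(p, q)) y z :
  mcvg x y -> mcvg x z -> y = z.
Proof. by move=> h1 h2; apply/matrixP => i j; exact: ccvg_unique (h1 i j) (h2 i j). Qed.

Definition psum N (A : 'M[C]_N) K := \sum_(k < K) (k`!%:R)^-1 *: mxpow A k.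

Lemma is_mexpE N (A M : 'M[C]_N) : is_mexp A M <-> mcvg (psum A) M.
Proof.
split => h i j; have [h1 h2] := h i j; split.
- exact: h1.
- exact: h2.
- exact: h1.
- exact: h2.
Qed.

End Cvg.

End Part1.
Import Part1.

Module Part2.
Import Order.TTheory GRing.Theory Num.Theory numFieldNormedType.Exports.
Set Implicit Arguments. Unset Strict Implicit. Unset Printing Implicit Defensive.
Local Open Scope ring_scope.

Section Bits.
Variable R : realType.
Local Notation C := (R[i]).

Lemma sum_double (h : nat -> C) M :
  \sum_(0 <= l < (2 * M)%N) h l = \sum_(0 <= l < M) (h (2 * l)%N + h (2 * l).+1).
Proof.
elim: M => [|M IH]; first by rewrite muln0 !big_geq.
rewrite mulnS !addSn add0n big_nat_recr // big_nat_recr //= IH big_nat_recr //=.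
by rewrite addrA.
Qed.

Lemma qbit0 l : qbit 0 l = odd l.
Proof. by rewrite /qbit expn0 divn1. Qed.

Lemma qbitS k l : qbit k.+1 l = qbit k (l %/ 2).
Proof. by rewrite /qbit expnS divnMA. Qed.

Lemma sum_prod_bits n (g : 'I_n -> bool -> C) :
  \sum_(l < 2 ^ n) \prod_(k < n) g k (qbit k l) = \prod_(k < n) (g k false + g k true).
Proof.
elim: n g => [|n IH] g.
  by rewrite expn0 big_ord1 !big_ord0.
rewrite big_ord_recl -(IH (fun k => g (lift ord0 k))).
under eq_bigr do rewrite big_ord_recl.
rewrite -(big_mkord xpredT (fun l => g ord0 (qbit ord0 l) *
   \prod_(i < n) g (lift ord0 i) (qbit (lift ord0 i) l))).
rewrite expnS sum_double big_mkord mulr_sumr.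
apply: eq_bigr => l _.
rewrite /= !qbit0 mulrDl.
have e1 : odd (2 * l) = false by rewrite oddM.
have e2 : odd (2 * l).+1 = true by rewrite /= oddM.
rewrite e1 e2; congr (_ * _ + _ * _); apply: eq_bigr => k _;
  rewrite /bump /= add1n qbitS; congr (g _ (qbit _ _)); lia.
Qed.

Lemma qbit_inj n (i j : 'I_(2 ^ n)) :
  (forall k : 'I_n, qbit k i = qbit k j) -> i = j.
Proof.
move=> h; apply/val_inj => /=; move: (ltn_ord i) (ltn_ord j) h.
move: (val i) (val j) => {i j}; elim: n => [|n IH] i j.
  by rewrite expn0 !ltnS !leqn0 => /eqP -> /eqP ->.
move=> hi hj h.
have h0 := h ord0; rewrite !qbit0 in h0.
have : (i %/ 2 = j %/ 2)%N.
  apply: IH; first by rewrite ltn_divLR // mulnC -expnS.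
    by rewrite ltn_divLR // mulnC -expnS.
  by move=> k; have := h (lift ord0 k); rewrite /= /bump /= add1n !qbitS.
by move=> e; rewrite (div.divn_eq i 2) (div.divn_eq j 2) e !modn2 h0.
Qed.

End Bits.

End Part2.
Import Part2.

Module Part3.
Import Order.TTheory GRing.Theory Num.Theory numFieldNormedType.Exports.
Set Implicit Arguments. Unset Strict Implicit. Unset Printing Implicit Defensive.
Local Open Scope ring_scope.

Definition lxn (a b : nat) : nat :=
  ((odd a (+) odd b) + 2 * (odd a./2 (+) odd b./2))%N.
Lemma lxn_lt a b : (lxn a b < 4)%N.
Proof. by rewrite /lxn; case: (_ (+) _); case: (_ (+) _). Qed.
Definition lx (a b : 'I_4) : 'I_4 := Ordinal (lxn_lt a b).

Ltac ord4 a := case: a => [[|[|[|[|?]]]] ?] //.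

Lemma lxC : commutative lx.
Proof. by move=> a b; ord4 a; ord4 b; apply/val_inj. Qed.
Lemma lxA : associative lx.
Proof. move=> a b c; ord4 a; ord4 b; ord4 c; apply/val_inj; reflexivity. Qed.
Lemma lx0 : left_id (ord0 : 'I_4) lx.
Proof. by move=> a; ord4 a; apply/val_inj. Qed.

Section Pauli.
Variable R : realType.
Local Notation C := (R[i]).

Definition om1 (a b : 'I_4) : C :=
  match val a, val b with
  | 1%N, 2%N | 2%N, 3%N | 3%N, 1%N => Complex 0 1
  | 2%N, 1%N | 3%N, 2%N | 1%N, 3%N => Complex 0 (-1)
  | _, _ => 1
  end.

Lemma pauli1_mul (a b : 'I_4) (x z : bool) :
  \sum_(y : bool) pauli1 R a x y * pauli1 R b y z = om1 a b * pauli1 R (lx a b) x z.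
Proof.
rewrite big_bool.
ord4 a; ord4 b; case: x; case: z; rewrite /pauli1 /om1 /=;
  apply/eqP; rewrite eq_complex /=; apply/andP; split; apply/eqP; ring.
Qed.

Lemma pauli1_mul' (a b : 'I_4) (x z : bool) :
  pauli1 R a x false * pauli1 R b false z + pauli1 R a x true * pauli1 R b true z
  = om1 a b * pauli1 R (lx a b) x z.
Proof. by rewrite -pauli1_mul big_bool addrC. Qed.

Definition plx n (u v : plabel n) : plabel n := [ffun k => lx (u k) (v k)].
Definition pl0 n : plabel n := [ffun => ord0].
Definition omn n (u v : plabel n) : C := \prod_k om1 (u k) (v k).

Lemma pauli_mul n (u v : plabel n) :
  pauli R u *m pauli R v = omn u v *: pauli R (plx u v).
Proof.
apply/matrixP => i j; rewrite !mxE.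
under eq_bigr do rewrite !mxE -big_split /=.
rewrite (sum_prod_bits (fun k y => pauli1 R (u k) (qbit k i) y *
    pauli1 R (v k) y (qbit k j))).
under eq_bigr do rewrite pauli1_mul'.
by rewrite big_split /=; congr (_ * _); apply: eq_bigr => k _; rewrite ffunE.
Qed.

Lemma pauli0 n : pauli R (pl0 n) = 1%:M.
Proof.
apply/matrixP => i j; rewrite !mxE.
case: (boolP [exists k : 'I_n, qbit k i != qbit k j]).
  move=> /existsP [k hk].
  rewrite (bigD1 k) //= ffunE /pauli1 /= (negbTE hk) mul0r.
  case: eqP => // e; move: hk; by rewrite e eqxx.
rewrite negb_exists => /forallP h.
have e : i = j by apply: qbit_inj => k; have := h k; rewrite negbK => /eqP.
rewrite e eqxx big1 // => k _; by rewrite ffunE /pauli1 /= eqxx.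
Qed.

End Pauli.

End Part3.
Import Part3.

Module Part4.
Import Order.TTheory GRing.Theory Num.Theory numFieldNormedType.Exports.
Set Implicit Arguments. Unset Strict Implicit. Unset Printing Implicit Defensive.
Local Open Scope ring_scope.

Section Span.
Variable R : realType.
Local Notation C := (R[i]).
Variable n : nat.
Variable G : {set plabel n}.
Hypothesis G0 : pl0 n \in G.
Hypothesis Gx : forall u v, u \in G -> v \in G -> plx u v \in G.

Definition inV (M : 'M[C]_(2 ^ n)) := exists c : plabel n -> C,
  (forall v, v \notin G -> c v = 0) /\ M = \sum_v c v *: pauli R v.

Lemma inV0 : inV 0.
Proof. by exists (fun _ => 0); split => //; rewrite big1 // => v _; rewrite scale0r. Qed.

Lemma inVD M N : inV M -> inV N -> inV (M + N).
Proof.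
move=> [c [hc ->]] [d [hd ->]]; exists (fun v => c v + d v); split.
  by move=> v hv; rewrite hc // hd // addr0.
by rewrite -big_split; apply: eq_bigr => v _; rewrite scalerDl.
Qed.

Lemma inVZ a M : inV M -> inV (a *: M).
Proof.
move=> [c [hc ->]]; exists (fun v => a * c v); split.
  by move=> v hv; rewrite hc // mulr0.
by rewrite scaler_sumr; apply: eq_bigr => v _; rewrite scalerA.
Qed.

Lemma inV_sum (I : finType) (F : I -> 'M[C]_(2 ^ n)) :
  (forall i, inV (F i)) -> inV (\sum_i F i).
Proof. by move=> h; apply: big_ind => //; [exact: inV0 | exact: inVD]. Qed.

Lemma inVP v : v \in G -> inV (pauli R v).
Proof.
move=> hv; exists (fun w => (w == v)%:R); split.
  by move=> w hw; case: eqP => // e; move: hw; rewrite e hv.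
rewrite (bigD1 v) //= eqxx scale1r big1 ?addr0 // => w /negbTE ->.
by rewrite scale0r.
Qed.

Lemma inV1 : inV 1%:M.
Proof. by rewrite -(pauli0 R); exact: inVP. Qed.

Lemma inVM M N : inV M -> inV N -> inV (M *m N).
Proof.
move=> [c [hc ->]] [d [hd ->]].
rewrite mulmx_suml; apply: inV_sum => u.
rewrite mulmx_sumr; apply: inV_sum => v.
rewrite -scalemxAl -scalemxAr pauli_mul !scalerA.
case: (boolP (u \in G)) => hu; last by rewrite hc // !mul0r scale0r; exact: inV0.
case: (boolP (v \in G)) => hv; last by rewrite hd // mulr0 mul0r scale0r; exact: inV0.
by apply: inVZ; apply: inVP; apply: Gx.
Qed.

Lemma inV_mxpow A k : inV A -> inV (mxpow A k).
Proof.
move=> hA; elim: k => [|k IH]; first exact: inV1.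
by rewrite /mxpow iterS; apply: inVM.
Qed.

Lemma inV_psum A K : inV A -> inV (psum A K).
Proof. by move=> hA; apply: inV_sum => k; apply: inVZ; apply: inV_mxpow. Qed.

End Span.

End Part4.
Import Part4.

Module Part5.
Import Order.TTheory GRing.Theory Num.Theory numFieldNormedType.Exports.
Set Implicit Arguments. Unset Strict Implicit. Unset Printing Implicit Defensive.
Local Open Scope ring_scope.

Section Closed.
Variable R : realType.
Local Notation C := (R[i]).
Variable n : nat.
Variable G : {set plabel n}.

Definition Bmx : 'M[C]_(#|{: plabel n}|, 2 ^ n * 2 ^ n) :=
  \matrix_r (if enum_val r \in G then mxvec (pauli R (enum_val r)) else 0).

Lemma inV_sub M : inV G M -> (mxvec M <= Bmx)%MS.
Proof.
move=> [c [hc ->]]; rewrite raddf_sum /=; apply: summx_sub => v _.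
rewrite linearZ /=; case: (boolP (v \in G)) => hv; last by rewrite hc // scale0r sub0mx.
apply: scalemx_sub.
have -> : mxvec (pauli R v) = row (enum_rank v) Bmx by rewrite rowK enum_rankK hv.
exact: row_sub.
Qed.

Lemma sub_inV M : (mxvec M <= Bmx)%MS -> inV G M.
Proof.
move=> /submxP [D hD].
rewrite -(mxvecK M) hD mulmx_sum_row raddf_sum /=; apply: inV_sum => r.
rewrite linearZ /=; apply: inVZ; rewrite rowK.
case: (boolP (enum_val r \in G)) => h.
  by rewrite mxvecK; apply: inVP.
by rewrite linear0; apply: inV0.
Qed.

Lemma mcvg_mxvec (x : nat -> 'M[C]_(2 ^ n)) M :
  mcvg x M -> mcvg (fun k => mxvec (x k)) (mxvec M).
Proof.
move=> h i t; rewrite (ord1 i); case/mxvec_indexP: t => a b.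
under eq_fun do rewrite mxvecE. rewrite mxvecE; exact: h.
Qed.

Lemma inV_closed (x : nat -> 'M[C]_(2 ^ n)) M :
  (forall k, inV G (x k)) -> mcvg x M -> inV G M.
Proof.
move=> hx hM; apply: sub_inV; rewrite submxE; apply/eqP.
have h1 := mcvg_mulr (cokermx Bmx) (mcvg_mxvec hM).
have e : (fun k => mxvec (x k) *m cokermx Bmx) = (fun _ => 0).
  by apply: funext => k; apply/eqP; rewrite -submxE; apply: inV_sub.
rewrite e in h1.
apply: (mcvg_unique h1) => i j; rewrite mxE; exact: ccvg_cst.
Qed.

End Closed.

End Part5.
Import Part5.

Module Part6.
Import Order.TTheory GRing.Theory Num.Theory numFieldNormedType.Exports.
Set Implicit Arguments. Unset Strict Implicit. Unset Printing Implicit Defensive.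
Local Open Scope ring_scope.

Lemma plxA n : associative (@plx n).
Proof. by move=> u v w; apply/ffunP => k; rewrite !ffunE lxA. Qed.
Lemma plxC n : commutative (@plx n).
Proof. by move=> u v; apply/ffunP => k; rewrite !ffunE lxC. Qed.
Lemma pl0x n : left_id (pl0 n) (@plx n).
Proof. by move=> u; apply/ffunP => k; rewrite !ffunE lx0. Qed.

HB.instance Definition _ (n : nat) :=
  Monoid.isComLaw.Build (plabel n) (pl0 n) (@plx n) (@plxA n) (@plxC n) (@pl0x n).

Lemma plx_canc n (c a b : plabel n) : plx (plx c a) (plx c b) = plx a b.
Proof.
apply/ffunP => k; rewrite !ffunE.
move: (c k) (a k) (b k) => x y z.
ord4 x; ord4 y; ord4 z; apply/val_inj; reflexivity.
Qed.

Section Grp.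
Variable n : nat.
Definition xs (X : {set plabel n}) := \big[@plx n/pl0 n]_(v in X) v.
Definition Gof (S : {set plabel n}) := xs @: powerset S.

Lemma Gof0 (S : {set plabel n}) : pl0 n \in Gof S.
Proof.
apply/imsetP; exists finset.set0; first by rewrite powersetE finset.sub0set.
by rewrite /xs big_set0.
Qed.

Lemma Gof1 (S : {set plabel n}) v : v \in S -> v \in Gof S.
Proof.
move=> hv; apply/imsetP; exists (finset.set1 v); first by rewrite powersetE finset.sub1set.
by rewrite /xs big_set1.
Qed.

Lemma Gofx (S : {set plabel n}) u v : u \in Gof S -> v \in Gof S -> plx u v \in Gof S.
Proof.
move=> /imsetP [X hX ->] /imsetP [Y hY ->].
rewrite powersetE in hX; rewrite powersetE in hY.
apply/imsetP; exists (finset.setU (finset.setD X Y) (finset.setD Y X)).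
  rewrite powersetE finset.subUset; apply/andP; split; apply: fintype.subset_trans (finset.subsetDl _ _) _ => //.
rewrite /xs (big_setID (A := X) Y) (big_setID (A := Y) X) finset.setIC plx_canc.
rewrite (big_setID (A := finset.setU (finset.setD X Y) (finset.setD Y X)) X).
congr (plx _ _); apply: eq_bigl => w; rewrite !inE;
  by case: (w \in X); case: (w \in Y).
Qed.

Lemma card_Gof (S : {set plabel n}) : (#|Gof S| <= 2 ^ #|S|)%N.
Proof. by rewrite -card_powerset leq_imset_card. Qed.

End Grp.

End Part6.
Import Part6.

Module Part7.
Import Order.TTheory GRing.Theory Num.Theory numFieldNormedType.Exports.
Set Implicit Arguments. Unset Strict Implicit. Unset Printing Implicit Defensive.
Local Open Scope ring_scope.
Local Open Scope classical_set_scope.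
Local Open Scope complex_scope.

Section Expi.
Variable R : realType.
Local Notation C := (R[i]).

Lemma mi2 : (- Complex (0:R) 1) ^+ 2 = -1 :> C.
Proof. apply/eqP; rewrite expr2 eq_complex /=; apply/andP; split; apply/eqP; ring. Qed.

Lemma mi_even j : (- Complex (0:R) 1) ^+ j.*2 = ((-1) ^+ j)%:C.
Proof. by rewrite -muln2 mulnC exprM mi2 rmorphXn /= rmorphN1. Qed.

Lemma mi_odd j : (- Complex (0:R) 1) ^+ j.*2.+1 = ((-1) ^+ j)%:C * (- Complex 0 1).
Proof. by rewrite exprS mi_even mulrC. Qed.

Lemma realC_mul (c a b : R) : c%:C * Complex a b = Complex (c * a) (c * b) :> C.
Proof. apply/eqP; rewrite eq_complex /=; apply/andP; split; apply/eqP; ring. Qed.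

Lemma natC (k : nat) : (k%:R : C) = (k%:R : R)%:C.
Proof. elim: k => [//|k IH]; rewrite !mulrS IH; apply/eqP; rewrite eq_complex /=; apply/andP; split; apply/eqP; ring. Qed.

Lemma expi_term (r : R) k :
  ((k`!%:R)^-1 * (- Complex 0 1 * r%:C) ^+ k : C) =
  Complex (cos_coeff r k) (- sin_coeff r k).
Proof.
rewrite exprMn -rmorphXn /= mulrA [_ * (- _) ^+ _]mulrC -mulrA.
have -> : ((k`!%:R)^-1 : C) = ((k`!%:R)^-1 : R)%:C by rewrite fmorphV /= natC.
rewrite -rmorphM /= mulrC.
rewrite /cos_coeff /sin_coeff /= -exprnP.
have ek := odd_double_half k.
set j := k./2 in ek *.
case: (odd k) in ek *; rewrite -ek ?add1n ?add0n.
- have hj : (j.*2.+1).-1./2 = j by rewrite -pred_Sn doubleK.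
  rewrite hj mi_odd mulrA -rmorphM /=.
  have -> : (- 'i%C : C) = Complex 0 (-1) by apply/eqP; rewrite eq_complex /= oppr0 !eqxx.
  rewrite realC_mul /=.
  apply/eqP; rewrite eq_complex /=; apply/andP; split; apply/eqP; ring.
- rewrite mi_even -rmorphM /=.
  apply/eqP; rewrite eq_complex /=; apply/andP; split; apply/eqP; ring.
Qed.

Lemma ReSum (I : Type) (r : seq I) (F : I -> C) :
  complex.Re (\sum_(k <- r) F k) = \sum_(k <- r) complex.Re (F k).
Proof. by apply: (big_morph _ (@ReD R)). Qed.
Lemma ImSum (I : Type) (r : seq I) (F : I -> C) :
  complex.Im (\sum_(k <- r) F k) = \sum_(k <- r) complex.Im (F k).
Proof. by apply: (big_morph _ (@ImD R)). Qed.

Lemma ccvg_expi (r : R) :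
  ccvg (fun K => \sum_(k < K) ((k`!%:R)^-1 * (- Complex 0 1 * r%:C) ^+ k : C))
       (Complex (cos r) (- sin r)).
Proof.
split.
- under eq_fun do rewrite ReSum.
  under eq_fun do under eq_bigr do rewrite expi_term /=.
  have -> : (fun K => \sum_(k < K) cos_coeff r k) = series (cos_coeff r).
    by apply: funext => K; rewrite /series /= big_mkord.
  have -> : cos r = lim (series (cos_coeff r) @ \oo) by rewrite unlock.
  exact: is_cvg_series_cos_coeff.
- under eq_fun do rewrite ImSum.
  under eq_fun do under eq_bigr do rewrite expi_term /=.
  have -> : (fun K => \sum_(k < K) - sin_coeff r k) = - series (sin_coeff r).
    apply: funext => K; rewrite /series.
    have -> : forall (f : nat -> R) (x : nat), (- f) x = - f x by [].
    by rewrite /= -sumrN big_mkord.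
  rewrite /=.
  have -> : sin r = lim (series (sin_coeff r) @ \oo) by rewrite unlock.
  apply: cvgN; exact: is_cvg_series_sin_coeff.
Qed.
End Expi.

End Part7.
Import Part7.

Module Part8.
Import Order.TTheory GRing.Theory Num.Theory numFieldNormedType.Exports.
Set Implicit Arguments. Unset Strict Implicit. Unset Printing Implicit Defensive.
Local Open Scope ring_scope.

Section Inj.
Variable R : realType.

Lemma cs_inj (a b : R) : `|a| < pi -> `|b| < pi ->
  cos a = cos b -> sin a = sin b -> a = b.
Proof.
move=> ha hb hc hs.
have hn : `|a| = `|b|.
  apply: cos_inj; rewrite ?cos_norm //; rewrite in_itv /= normr_ge0 /=; exact: ltW.
move/eqP: hn; rewrite eqr_norm2 => /orP [/eqP //|/eqP e].
rewrite e sinN in hs.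
have s0 : sin b = 0 by lra.
case: (boolP (b == 0)) => [/eqP b0|bn0]; first by rewrite e b0 oppr0.
have : 0 < sin `|b|.
  apply: sin_gt0_pi; rewrite normr_gt0 bn0 /=; exact: hb.
case: (ler0P b) => hb0.
- by rewrite ?ler0_norm // sinN s0 oppr0 ltxx.
- by rewrite ?gtr0_norm // s0 ltxx.
Qed.
End Inj.

End Part8.
Import Part8.

Module Part9.
Import Order.TTheory GRing.Theory Num.Theory numFieldNormedType.Exports.
Set Implicit Arguments. Unset Strict Implicit. Unset Printing Implicit Defensive.
Local Open Scope ring_scope.

Lemma interp (F : fieldType) (s : seq F) (f : F -> F) :
  exists p : {poly F}, forall x, x \in s -> p.[x] = f x.
Proof.
elim: s => [|x s [q hq]]; first by exists 0.
case: (boolP (x \in s)) => hx.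
  by exists q => y; rewrite inE => /orP [/eqP ->|]; apply: hq.
pose P := \prod_(y <- s) ('X - y%:P).
have PE z : P.[z] = \prod_(y <- s) (z - y).
  by rewrite /P horner_prod; apply: eq_bigr => y _; rewrite hornerXsubC.
have Px : P.[x] != 0.
  rewrite PE prodf_seq_neq0; apply/allP => y hy /=; rewrite subr_eq0.
  by apply: contraNneq hx => ->.
exists (q + ((f x - q.[x]) / P.[x]) *: P) => y; rewrite inE => /orP [/eqP ->|hy].
  by rewrite hornerD hornerZ mulfVK // addrC subrK.
rewrite hornerD hornerZ hq //.
have -> : P.[y] = 0.
  apply/eqP; rewrite PE prodf_seq_eq0; apply/hasP; exists y => //=.
  by rewrite subrr.
by rewrite mulr0 addr0.
Qed.

End Part9.
Import Part9.

Module Part10.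
Import Order.TTheory GRing.Theory Num.Theory numFieldNormedType.Exports.
Set Implicit Arguments. Unset Strict Implicit. Unset Printing Implicit Defensive.
Local Open Scope ring_scope.

Section Diag.
Variable R : realType.
Local Notation C := (R[i]).
Variable N : nat.
Variables P Q : 'M[C]_N.
Hypothesis hPQ : P *m Q = 1%:M.
Hypothesis hQP : Q *m P = 1%:M.

Lemma diag_mul (e f : 'rV[C]_N) :
  diag_mx e *m diag_mx f = diag_mx (\row_j (e 0 j * f 0 j)).
Proof.
apply/matrixP => i j; rewrite mul_diag_mx !mxE.
by case: (i == j); rewrite ?mulr1n ?mulr0n ?mulr0.
Qed.

Lemma conj_pow (e : 'rV[C]_N) k :
  mxpow (Q *m diag_mx e *m P) k = Q *m diag_mx (\row_j (e 0 j ^+ k)) *m P.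
Proof.
elim: k => [|k IH].
  rewrite /mxpow /=.
  have -> : (\row_j (e 0 j ^+ 0)) = const_mx 1 by apply/rowP => j; rewrite !mxE expr0.
  by rewrite diag_const_mx mulmx1 hQP.
rewrite /mxpow iterS -/(mxpow _ k) IH.
rewrite -!mulmxA [P *m (Q *m _)]mulmxA hPQ mul1mx !mulmxA -[Q *m _ *m _]mulmxA diag_mul.
by congr (Q *m diag_mx _ *m P); apply/rowP => j; rewrite !mxE exprS.
Qed.

Lemma sum_conj (K : nat) (a : 'I_K -> C) (v : 'I_K -> 'rV[C]_N) :
  \sum_(k < K) a k *: (Q *m diag_mx (v k) *m P) =
  Q *m diag_mx (\row_j \sum_(k < K) a k * v k 0 j) *m P.
Proof.
have -> : (\row_j \sum_(k < K) a k * v k 0 j) = \sum_(k < K) a k *: v k.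
  by apply/rowP => j; rewrite !mxE summxE; apply: eq_bigr => k _; rewrite !mxE.
rewrite raddf_sum mulmx_sumr mulmx_suml; apply: eq_bigr => k _.
rewrite scalemxAl scalemxAr; congr (_ *m _ *m _).
by apply/matrixP => i j; rewrite !mxE mulrnAr.
Qed.

End Diag.

End Part10.
Import Part10.

Module Part11.
Import Order.TTheory GRing.Theory Num.Theory numFieldNormedType.Exports.
Set Implicit Arguments. Unset Strict Implicit. Unset Printing Implicit Defensive.
Local Open Scope ring_scope.
Local Open Scope sesquilinear_scope.

Section Norm.
Variable R : realType.
Local Notation C := (R[i]).
Variable N : nat.

Lemma normsq (z : C) : ((complex.Re z ^+ 2 + complex.Im z ^+ 2)%:C)%C = z^* * z.
Proof. case: z => a b; apply/eqP; rewrite eq_complex /=; apply/andP; split; apply/eqP; ring. Qed.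

Lemma vnorm2C (v : 'cV[C]_N) : ((vnorm2 v)%:C)%C = (v ^t* *m v) 0 0.
Proof.
rewrite /vnorm2 rmorph_sum !mxE; apply: eq_bigr => i _.
by rewrite !mxE; apply: normsq.
Qed.

Lemma vnorm2_unit (U : 'M[C]_N) (v : 'cV[C]_N) :
  U ^t* *m U = 1%:M -> vnorm2 (U *m v) = vnorm2 v.
Proof.
move=> hU; apply: (@complexI R); rewrite !vnorm2C trmx_mul map_mxM.
by rewrite mulmxA -[_ *m U ^t* *m U]mulmxA hU mulmx1.
Qed.

Lemma vnorm2_ge0 (v : 'cV[C]_N) : 0 <= vnorm2 v.
Proof. by apply: sumr_ge0 => i _; apply: addr_ge0; apply: sqr_ge0. Qed.

Lemma vnorm2_diag (d : 'rV[C]_N) (r : 'I_N -> R) (y : 'cV[C]_N) :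
  (forall j, d 0 j = ((r j)%:C)%C) ->
  vnorm2 (diag_mx d *m y) = \sum_i r i ^+ 2 * (complex.Re (y i 0) ^+ 2 + complex.Im (y i 0) ^+ 2).
Proof.
move=> hd; rewrite /vnorm2; apply: eq_bigr => i _.
rewrite mul_diag_mx !mxE hd; case: (y i 0) => a b /=; ring.
Qed.

Lemma vnorm2_diag_le (d : 'rV[C]_N) (r : 'I_N -> R) (y : 'cV[C]_N) :
  (forall j, d 0 j = ((r j)%:C)%C) ->
  vnorm2 (diag_mx d *m y) <= (\sum_j r j ^+ 2) * vnorm2 y.
Proof.
move=> hd; rewrite (vnorm2_diag _ hd) /vnorm2 mulr_sumr; apply: ler_sum => i _.
apply: ler_wpM2r; first by apply: addr_ge0; apply: sqr_ge0.
rewrite (bigD1 i) //= lerDl; apply: sumr_ge0 => j _; exact: sqr_ge0.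
Qed.

Lemma vnorm2_delta (j : 'I_N) : vnorm2 (delta_mx j 0 : 'cV[C]_N) = 1.
Proof.
rewrite /vnorm2 (bigD1 j) //= big1 ?addr0.
  by rewrite !mxE !eqxx /=; rewrite expr1n expr0n /= addr0.
by move=> i /negbTE hi; rewrite !mxE hi /= expr0n addr0.
Qed.


Lemma vnorm2Z (c : R) (v : 'cV[C]_N) : vnorm2 (((c%:C)%C) *: v) = c ^+ 2 * vnorm2 v.
Proof.
rewrite /vnorm2 mulr_sumr; apply: eq_bigr => i _.
rewrite !mxE; case: (v i 0) => a b /=; ring.
Qed.

Lemma eig_bound (W P Q : 'M[C]_N) (d : 'rV[C]_N) (r : 'I_N -> R) :
  (forall j, d 0 j = ((r j)%:C)%C) -> W = Q *m diag_mx d *m P ->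
  P *m Q = 1%:M -> Q ^t* *m Q = 1%:M -> P ^t* *m P = 1%:M ->
  forall j, `|r j| <= opnorm W.
Proof.
move=> hd hW hPQ hQ hP j.
rewrite /opnorm.
set S := (X in sup X).
have ub : ubound S (Num.sqrt (\sum_i r i ^+ 2)).
  move=> x [v /= hv <-]; apply: ler_wsqrtr.
  rewrite hW -!mulmxA vnorm2_unit //.
  apply: le_trans (vnorm2_diag_le _ hd) _.
  by rewrite vnorm2_unit // hv mulr1.
have mem : S `|r j|.
  exists (Q *m delta_mx j 0).
    have h1 : vnorm2 (Q *m (delta_mx j 0 : 'cV[C]_N)) = 1.
      by rewrite vnorm2_unit // vnorm2_delta.
    exact: h1.
  rewrite hW -!mulmxA [P *m (Q *m _)]mulmxA hPQ mul1mx.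
  have -> : diag_mx d *m delta_mx j 0 = d 0 j *: (delta_mx j 0 : 'cV[C]_N).
    apply/matrixP => i k; rewrite mul_diag_mx !mxE.
    by case: eqP => [->|_]; rewrite ?mulr1 ?mulr0.
  by rewrite hd -scalemxAr vnorm2Z vnorm2_unit // vnorm2_delta mulr1 sqrtr_sqr.
apply: sup_upper_bound => //; split; first by exists `|r j|.
by exists (Num.sqrt (\sum_i r i ^+ 2)).
Qed.

End Norm.

End Part11.
Import Part11.

Module Part12.
Import Order.TTheory GRing.Theory Num.Theory numFieldNormedType.Exports.
Set Implicit Arguments. Unset Strict Implicit. Unset Printing Implicit Defensive.
Local Open Scope ring_scope.
Local Open Scope sesquilinear_scope.

Section Core.
Variable R : realType.
Local Notation C := (R[i]).

Lemma W_poly N (W E : 'M[C]_N) : hermitian_op W -> opnorm W < pi ->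
  is_mexp (- Complex 0 1 *: W) E ->
  exists p : {poly C}, W = \sum_(k < size p) p`_k *: mxpow E k.
Proof.
move=> hW hop hE.
have hW' : W \is hermsymmx.
  apply/is_hermitianmxP; rewrite expr0 scale1r; apply/matrixP => i j; rewrite !mxE.
  by rewrite hW.
have /orthomx_spectralP hsp := hermitian_normalmx hW'.
set P := spectralmx W in hsp; set d := spectral_diag W in hsp.
set Q := invmx P in hsp.
have Pu : P \is unitarymx by apply: spectral_unitarymx.
have Punit : P \in unitmx by apply: spectral_unit.
have hPQ : P *m Q = 1%:M by apply: mulmxV.
have hQP : Q *m P = 1%:M by apply: mulVmx.
have hQt : Q = P ^t* by apply: invmx_unitary.
have hQ : Q ^t* *m Q = 1%:M by rewrite {1}hQt trmxCK.
have hP : P ^t* *m P = 1%:M by rewrite -hQt.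
have /mxOverP hr := hermitian_spectral_diag_real hW'.
pose r j := complex.Re (d 0 j).
have hd : forall j, d 0 j = ((r j)%:C)%C by move=> j; rewrite /r RRe_real //; exact: hr.
have hb : forall j, `|r j| < pi by move=> j; exact: le_lt_trans (eig_bound hd hsp hPQ hQ hP j) hop.
pose c : C := - Complex 0 1.
have hcW : c *: W = Q *m diag_mx (\row_j (c * d 0 j)) *m P.
  rewrite hsp scalemxAl scalemxAr; congr (_ *m _ *m _).
  by apply/matrixP => i j; rewrite !mxE mulrnAr.
pose s K j := \sum_(k < K) (k`!%:R)^-1 * (c * d 0 j) ^+ k.
have hps : forall K, psum (c *: W) K = Q *m diag_mx (\row_j s K j) *m P.
  move=> K; rewrite /psum hcW.
  under eq_bigr do rewrite (conj_pow hPQ hQP).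
  rewrite sum_conj; congr (_ *m diag_mx _ *m _); apply/rowP => j; rewrite !mxE.
  by apply: eq_bigr => k _; rewrite !mxE.
have hE' : mcvg (psum (c *: W)) E by apply/is_mexpE.
have hE2 := mcvg_mulr Q (mcvg_mull P hE').
pose lam j : C := Complex (cos (r j)) (- sin (r j)).
have hPEQ : P *m E *m Q = diag_mx (\row_j lam j).
  apply/matrixP => i j.
  have := hE2 i j; under eq_fun do rewrite hps !mulmxA hPQ mul1mx -mulmxA hPQ mulmx1.
  move=> h; apply: (ccvg_unique h); rewrite mxE.
  under eq_fun do rewrite mxE.
  case: eqP => [_|_]; last by under eq_fun do rewrite mulr0n; exact: ccvg_cst.
  under eq_fun do rewrite mulr1n mxE.
  rewrite mulr1n mxE /s hd.
  exact: ccvg_expi.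
have hEd : E = Q *m diag_mx (\row_j lam j) *m P.
  by rewrite -hPEQ !mulmxA hQP mul1mx -mulmxA hQP mulmx1.
pose f (x : C) : C := if [pick j | lam j == x] is Some j then d 0 j else 0.
have [p hp] := interp [seq lam j | j <- enum 'I_N] f.
have hpj : forall j, p.[lam j] = d 0 j.
  move=> j; rewrite hp; last by apply: map_f; rewrite mem_enum.
  rewrite /f; case: pickP => [j' /eqP e|]; last by move=> /(_ j); rewrite eqxx.
  rewrite !hd; congr ((_)%:C)%C.
  case: e => e1 e2; apply: cs_inj => //; exact: oppr_inj.
exists p.
rewrite hEd.
under eq_bigr do rewrite (conj_pow hPQ hQP).
rewrite sum_conj hsp; congr (_ *m diag_mx _ *m _); apply/rowP => j.
by rewrite !mxE -hpj horner_coef; apply: eq_bigr => k _; rewrite !mxE.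
Qed.
End Core.

End Part12.
Import Part12.

Local Open Scope ring_scope.


Theorem mainTheorem12 (R : realType) (n m : nat) (H Hj W : 'M[cplx R]_(2 ^ n))
    (T phi : R) :
  hermitian_op H -> hermitian_op Hj ->
  pauli_sparsity_le H m -> pauli_sparsity_le Hj m ->
  hermitian_op W -> opnorm W < pi ->
  (exists E1 E2 E3 : 'M[cplx R]_(2 ^ n),
      is_mexp (- Complex 0 1 *: W) E1 /\
      is_mexp (Complex 0 T *: H) E2 /\
      is_mexp (- Complex 0 T *: Hj) E3 /\
      E1 = Complex (cos phi) (sin phi) *: (E2 *m E3)) ->
  pauli_sparsity_le W (4 ^ m).
Proof.
move=> _ _ [cH [eH hcH]] [cJ [eJ hcJ]] hW hop [E1 [E2 [E3 [h1 [h2 [h3 e1]]]]]].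
set SH := [set v | cH v != 0] in hcH.
set SJ := [set v | cJ v != 0] in hcJ.
pose G := Gof (SH :|: SJ).
have G0 : pl0 n \in G by apply: Gof0.
have Gx : forall u v, u \in G -> v \in G -> plx u v \in G by move=> u v; apply: Gofx.
have inH : inV G H.
  exists cH; split => // v hv; apply/eqP; apply: contraNT hv => hv.
  by apply: Gof1; rewrite finset.in_setU finset.in_set hv.
have inJ : inV G Hj.
  exists cJ; split => // v hv; apply/eqP; apply: contraNT hv => hv.
  by apply: Gof1; rewrite finset.in_setU !finset.in_set hv orbT.
have in2 : inV G E2.
  apply: (inV_closed (x := psum (Complex 0 T *: H))); last by apply/is_mexpE.
  by move=> k; apply: inV_psum => //; apply: inVZ.
have in3 : inV G E3.
  apply: (inV_closed (x := psum (- Complex 0 T *: Hj))); last by apply/is_mexpE.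
  by move=> k; apply: inV_psum => //; apply: inVZ.
have in1 : inV G E1 by rewrite e1; apply: inVZ; apply: inVM.
have [p ep] := W_poly hW hop h1.
have [c [hc eW]] : inV G W.
  rewrite ep; apply: inV_sum => k; apply: inVZ; exact: inV_mxpow.
exists [ffun v => c v]; split.
  by rewrite eW; apply: eq_bigr => v _; rewrite ffunE.
apply: leq_trans (_ : #|G| <= _)%N.
  apply: subset_leq_card; apply/fintype.subsetP => v; rewrite finset.in_set ffunE => hv.
  by apply: contraNT hv => hv; rewrite hc.
apply: leq_trans (card_Gof _) _.
have -> : (4 ^ m = 2 ^ (2 * m))%N by rewrite expnM.
rewrite leq_pexp2l //.
rewrite cardsU; apply: leq_trans (leq_subr _ _) _.
by rewrite mul2n -addnn leq_add.
Qed.
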